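(* Over chain graphs, MWL is subsumed by $\mathrm{FO}[<,+,\{P_a\}_{a\in\Sigma}]$: for every MWL sentence $\phi$ there is an $\mathrm{FO}[<,+,\{P_a\}_{a\in\Sigma}]$ sentence $\psi$ such that for every chain data graph $G$ whose only data are node ids (i.e. $\mathrm{dataof}$ is constant), $G\models\phi$ iff $w_G\models\psi$, where $w_G\in\Sigma^*$ is the label of the path from the first to the last node of $G$. Consequently, the query ''the number of $a$-labelled edges is even'' is not expressible in MWL.
   Context: Data graphs. Fix a finite alphabet $\Sigma$ and infinite data domains $\mathcal D_{\mathrm{id}}$ and $\mathcal D_{\mathrm{prop}}$. A data graph is $G=(V,E,\mathrm{id},\mathrm{dataof})$ with $V$ a finite nonempty set of nodes, $E\subseteq V\times\Sigma\times V$, $\mathrm{id}:V\to\mathcal D_{\mathrm{id}}$ injective and $\mathrm{dataof}:V\to\mathcal D_{\mathrm{prop}}$. A path is a sequence $\rho=v_0a_1v_1\cdots a_nv_n$ ($n\ge 0$) with $(v_{i-1},a_i,v_i)\in E$ for all $i$; its length is $n$, its positions are $0,\dots,n$, its label is $a_1\cdots a_n$. A chain data graph is a connected data graph in which every node has at most one predecessor and at most one successor. WL (walk logic). Path variables $\pi,\omega,\dots$ range over paths; each position variable $\ell^\pi$ has a sort $\pi$ and ranges over positions of the path assigned to $\pi$. Atoms: $E_a(\ell^\pi,m^\pi)$ ($m=\ell+1$ and the $m$-th label of the path is $a$); $\ell^\pi<m^\pi$ (same sort only); $\ell^\pi\equiv_{\mathrm{id}} n^\omega$ (the nodes at these positions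 are equal); $\ell^\pi\equiv_{\mathrm{data}} n^\omega$ (these nodes have equal $\mathrm{dataof}$). Closed under $\neg,\vee,\exists\ell^\pi,\exists\pi$. MWL (multi-path walk logic) is WL extended with atoms $\ell^\pi<n^\omega$ for arbitrary (possibly different) sorts $\pi,\omega$, true iff the position assigned to $\ell^\pi$ is smaller, as an integer, than the position assigned to $n^\omega$. $\mathrm{FO}[<,+,\{P_a\}_{a\in\Sigma}]$ is first-order logic over finite words $w\in\Sigma^*$ whose variables range over positions of $w$, with the natural order $<$, the ternary addition relation $x+y=z$ on positions, and unary predicates $P_a$ (''position carries letter $a$''). *)

(* Defs.v *)
From mathcomp Require Import all_boot.
Set Implicit Arguments. Unset Strict Implicit. Unset Printing Implicit Defensive.

Record datagraph (Sigma : finType) (Did Dprop : Type) := DataGraph {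
  dg_V : finType;
  dg_E : dg_V -> Sigma -> dg_V -> bool;
  dg_id : dg_V -> Did;
  dg_id_inj : injective dg_id;
  dg_data : dg_V -> Dprop;
  dg_nonempty : 0 < #|dg_V|
}.

Section Graphs.
Variables (Sigma : finType) (Did Dprop : Type).
Variable G : datagraph Sigma Did Dprop.
Local Notation V := (dg_V G).
Local Notation E := (@dg_E _ _ _ G).

(* A path v0 a1 v1 ... an vn is represented by (v0, [:: (a1,v1); ...; (an,vn)]). *)
Definition gpath := (V * seq (Sigma * V))%type.

Fixpoint valid_steps (u : V) (s : seq (Sigma * V)) : bool :=
  match s with
  | [::] => true
  | (a, v) :: s' => E u a v && valid_steps v s'
  end.

Definition is_path (rho : gpath) : bool := valid_steps rho.1 rho.2.

Definition path_len (rho : gpath) : nat := size rho.2.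
Definition path_label (rho : gpath) : seq Sigma := map fst rho.2.
Definition path_last (rho : gpath) : V := last rho.1 (map snd rho.2).

Definition node_at (rho : gpath) (i : nat) : option V :=
  onth (rho.1 :: map snd rho.2) i.
(* label a_m of the m-th edge (m in 1..n): onth label (m-1) *)

Definition und_adj : rel V := fun x y => [exists a, E x a y || E y a x].
Definition connected_graph : Prop := forall u v : V, connect und_adj u v.

(* at most one predecessor / successor (counted as incoming / outgoing edges,
   so that the label of the path from the first to the last node is unique) *)
Definition at_most_one_pred : Prop :=
  forall v u1 u2 a1 a2, E u1 a1 v -> E u2 a2 v -> u1 = u2 /\ a1 = a2.
Definition at_most_one_succ : Prop :=
  forall u v1 v2 a1 a2, E u a1 v1 -> E u a2 v2 -> v1 = v2 /\ a1 = a2.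

Definition chain_graph : Prop :=
  [/\ connected_graph, at_most_one_pred & at_most_one_succ].

Definition const_data : Prop := forall u v : V, @dg_data _ _ _ G u = @dg_data _ _ _ G v.

Definition first_node (v : V) : Prop := forall u a, ~~ E u a v.
Definition last_node (v : V) : Prop := forall u a, ~~ E v a u.

Definition first_to_last_path (rho : gpath) : Prop :=
  [/\ is_path rho, first_node rho.1 & last_node (path_last rho)].

Definition count_label_edges (a : Sigma) : nat :=
  #|[pred e : V * V | E e.1 a e.2]|.

End Graphs.

(* Path variables are natural numbers; a position variable l^p is the pair
   (name l, sort p). *)
Inductive mwl (Sigma : Type) : Type :=
| MEdge   of Sigma & nat & nat & nat        (* MEdge a p l m  :  E_a(l^p, m^p) *)
| MLt     of nat & nat & nat & nat          (* MLt l p n q    :  l^p < n^q (any sorts) *)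
| MEqId   of nat & nat & nat & nat          (* MEqId l p n q  :  l^p ==_id n^q *)
| MEqData of nat & nat & nat & nat          (* MEqData l p n q : l^p ==_data n^q *)
| MNot    of mwl Sigma
| MOr     of mwl Sigma & mwl Sigma
| MExPos  of nat & nat & mwl Sigma          (* MExPos l p f : exists l^p, f *)
| MExPath of nat & mwl Sigma.               (* MExPath p f  : exists p, f *)

Arguments MEdge {Sigma}. Arguments MLt {Sigma}. Arguments MEqId {Sigma}.
Arguments MEqData {Sigma}. Arguments MNot {Sigma}. Arguments MOr {Sigma}.
Arguments MExPos {Sigma}. Arguments MExPath {Sigma}.

Fixpoint mwl_closed_rec (Sigma : Type) (bp : seq nat) (bpos : seq (nat * nat))
    (f : mwl Sigma) : bool :=
  let okv l p := ((l, p) \in bpos) && (p \in bp) in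
  match f with
  | MEdge _ p l m => okv l p && okv m p
  | MLt l p n q => okv l p && okv n q
  | MEqId l p n q => okv l p && okv n q
  | MEqData l p n q => okv l p && okv n q
  | MNot g => mwl_closed_rec bp bpos g
  | MOr g h => mwl_closed_rec bp bpos g && mwl_closed_rec bp bpos h
  | MExPos l p g => (p \in bp) && mwl_closed_rec bp ((l, p) :: bpos) g
  | MExPath p g => mwl_closed_rec (p :: bp) bpos g
  end.

Definition mwl_sentence (Sigma : Type) (f : mwl Sigma) : bool :=
  mwl_closed_rec [::] [::] f.

Section MWLsem.
Variables (Sigma : finType) (Did Dprop : Type).
Variable G : datagraph Sigma Did Dprop.

Definition upd_pos (mu : nat -> nat -> nat) (l p i : nat) : nat -> nat -> nat :=
  fun l' p' => if (l' == l) && (p' == p) then i else mu l' p'.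
Definition upd_path (nu : nat -> gpath G) (p : nat) (rho : gpath G) : nat -> gpath G :=
  fun p' => if p' == p then rho else nu p'.

(* nu : path assignment; mu l p : position (an integer) assigned to l^p.
   Atoms that need the node/label at a position are false if that position
   lies outside the current path of its sort. *)
Fixpoint mwl_sat (nu : nat -> gpath G) (mu : nat -> nat -> nat) (f : mwl Sigma)
    : Prop :=
  match f with
  | MEdge a p l m =>
      mu m p = (mu l p).+1 /\ onth (path_label (nu p)) (mu l p) = Some a
  | MLt l p n q => mu l p < mu n q
  | MEqId l p n q => exists u v, node_at (nu p) (mu l p) = Some u /\
                                 node_at (nu q) (mu n q) = Some v /\ u = v
  | MEqData l p n q => exists u v, node_at (nu p) (mu l p) = Some u /\
                          node_at (nu q) (mu n q) = Some v /\
                          @dg_data _ _ _ G u = @dg_data _ _ _ G v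
  | MNot g => ~ mwl_sat nu mu g
  | MOr g h => mwl_sat nu mu g \/ mwl_sat nu mu h
  | MExPos l p g => exists i, i <= path_len (nu p) /\ mwl_sat nu (upd_pos mu l p i) g
  | MExPath p g => exists rho, is_path rho /\ mwl_sat (upd_path nu p rho) mu g
  end.

Definition mwl_models (f : mwl Sigma) : Prop :=
  forall nu mu, mwl_sat nu mu f.
End MWLsem.

(* Positions of w are 0, ..., size w - 1. *)
Inductive fo (Sigma : Type) : Type :=
| FLt  of nat & nat
| FAdd of nat & nat & nat
| FP   of Sigma & nat
| FEq  of nat & nat
| FNot of fo Sigma
| FOr  of fo Sigma & fo Sigma
| FEx  of nat & fo Sigma.

Arguments FLt {Sigma}. Arguments FAdd {Sigma}. Arguments FP {Sigma}.
Arguments FEq {Sigma}. Arguments FNot {Sigma}. Arguments FOr {Sigma}.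
Arguments FEx {Sigma}.

Fixpoint fo_closed_rec (Sigma : Type) (bv : seq nat) (f : fo Sigma) : bool :=
  match f with
  | FLt x y => (x \in bv) && (y \in bv)
  | FAdd x y z => [&& x \in bv, y \in bv & z \in bv]
  | FP _ x => x \in bv
  | FEq x y => (x \in bv) && (y \in bv)
  | FNot g => fo_closed_rec bv g
  | FOr g h => fo_closed_rec bv g && fo_closed_rec bv h
  | FEx x g => fo_closed_rec (x :: bv) g
  end.

Definition fo_sentence (Sigma : Type) (f : fo Sigma) : bool := fo_closed_rec [::] f.

Fixpoint fo_sat (Sigma : Type) (w : seq Sigma) (s : nat -> nat) (f : fo Sigma)
    : Prop :=
  match f with
  | FLt x y => s x < s y
  | FAdd x y z => s x + s y = s z
  | FP a x => onth w (s x) = Some a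
  | FEq x y => s x = s y
  | FNot g => ~ fo_sat w s g
  | FOr g h => fo_sat w s g \/ fo_sat w s h
  | FEx x g => exists i, i < size w /\
                 fo_sat w (fun y => if y == x then i else s y) g
  end.

Definition fo_models (Sigma : Type) (w : seq Sigma) (f : fo Sigma) : Prop :=
  forall s, fo_sat w s f.

(* Main.v *)
Require Import Defs.
From mathcomp Require Import all_boot zify.
From Stdlib Require Import Classical.
Set Implicit Arguments. Unset Strict Implicit. Unset Printing Implicit Defensive.

Inductive nl (Sigma : Type) : Type :=
| NLt of nat & nat
| NAdd of nat & nat & nat
| NP of Sigma & nat
| NNot of nl Sigma
| NOr of nl Sigma & nl Sigma
| NAnd of nl Sigma & nl Sigma
| NEx of nat & nl Sigma.
Arguments NLt {Sigma}. Arguments NAdd {Sigma}. Arguments NP {Sigma}.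
Arguments NNot {Sigma}. Arguments NOr {Sigma}. Arguments NAnd {Sigma}. Arguments NEx {Sigma}.

Definition updn (s : nat -> nat) (x i : nat) : nat -> nat :=
  fun y => if y == x then i else s y.

Fixpoint nl_sat (Sigma : Type) (w : seq Sigma) (s : nat -> nat) (f : nl Sigma) : Prop :=
  match f with
  | NLt x y => s x < s y
  | NAdd x y z => s x + s y = s z
  | NP a x => onth w (s x) = Some a
  | NNot g => ~ nl_sat w s g
  | NOr g h => nl_sat w s g \/ nl_sat w s h
  | NAnd g h => nl_sat w s g /\ nl_sat w s h
  | NEx x g => exists i, i <= size w /\ nl_sat w (updn s x i) g
  end.

Definition FAnd (Sigma : Type) (f g : fo Sigma) := FNot (FOr (FNot f) (FNot g)).
Definition FFalse (Sigma : Type) : fo Sigma := FEx 0 (FLt 0 0).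
Definition FTrue (Sigma : Type) : fo Sigma := FNot (FFalse Sigma).
Definition FIsZero (Sigma : Type) (u : nat) : fo Sigma := FNot (FEx 0 (FLt 0 u)).
Definition FEmpty (Sigma : Type) : fo Sigma := FNot (FEx 0 (FEq 0 0)).
Definition FSumN (Sigma : Type) (u v : nat) : fo Sigma :=
  FEx 0 (FEx 1 (FAnd (FAnd (FLt 0 u) (FNot (FEx 2 (FAnd (FLt 0 2) (FLt 2 u)))))
                     (FAnd (FNot (FEx 2 (FLt 1 2))) (FAdd 0 v 1)))).

Definition updb (e : nat -> bool) (x : nat) (b : bool) : nat -> bool :=
  fun y => if y == x then b else e y.

Fixpoint tr (Sigma : Type) (env : nat -> bool) (f : nl Sigma) : fo Sigma :=
  match f with
  | NLt x y => match env x, env y with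
               | false, false => FLt x.+3 y.+3
               | true, _ => FFalse Sigma
               | false, true => FTrue Sigma end
  | NAdd x y z => match env x, env y, env z with
               | false, false, false => FAdd x.+3 y.+3 z.+3
               | false, false, true => FSumN Sigma x.+3 y.+3
               | false, true, true => FIsZero Sigma x.+3
               | true, false, true => FIsZero Sigma y.+3
               | true, true, true => FEmpty Sigma
               | _, _, _ => FFalse Sigma end
  | NP a x => if env x then FFalse Sigma else FP a x.+3
  | NNot g => FNot (tr env g)
  | NOr g h => FOr (tr env g) (tr env h)
  | NAnd g h => FAnd (tr env g) (tr env h)
  | NEx x g => FOr (FEx x.+3 (tr (updb env x false) g)) (tr (updb env x true) g)
  end.

Section S.
Variable Sigma : finType.
Implicit Types (w : seq Sigma).

Definition Rel w (env : nat -> bool) (sg s : nat -> nat) :=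
  forall x, if env x then sg x = size w else sg x = s x.+3 /\ sg x < size w.

Lemma FAnd_sat w s f g : fo_sat w s (FAnd f g) <-> fo_sat w s f /\ fo_sat w s g.
Proof. rewrite /=; split; [move=> H; split; apply: NNPP => K; apply: H; tauto|tauto]. Qed.
Lemma nn_and (A B : Prop) : ~ (~ A \/ ~ B) -> A /\ B.
Proof. move=> H; split; apply: NNPP => K; apply: H; tauto. Qed.
Lemma and_nn (A B : Prop) : A -> B -> ~ (~ A \/ ~ B).
Proof. tauto. Qed.
Lemma FAnd_E w s f g : fo_sat w s (FAnd f g) -> fo_sat w s f /\ fo_sat w s g.
Proof. by move/FAnd_sat. Qed.
Lemma FAnd_I w s f g : fo_sat w s f -> fo_sat w s g -> fo_sat w s (FAnd f g).
Proof. by move=> *; apply/FAnd_sat. Qed.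
Lemma FFalse_sat w s : ~ fo_sat w s (FFalse Sigma).
Proof. by move=> [i [_ /=]]; rewrite ltnn. Qed.
Lemma FTrue_sat w s : fo_sat w s (FTrue Sigma).
Proof. exact: (@FFalse_sat w s). Qed.

Lemma FIsZero_sat w s u : 3 <= u -> s u < size w -> (fo_sat w s (FIsZero Sigma u) <-> s u = 0).
Proof.
case: u => [|[|[|u]]] // _ Hu /=; split.
  move=> H; case E: (s _) => [//|m]; exfalso; apply: H; exists 0; split; first by lia.
  by rewrite /= E.
by move=> E [i [_ /=]]; rewrite E.
Qed.

Lemma FEmpty_sat w s : fo_sat w s (FEmpty Sigma) <-> size w = 0.
Proof.
rewrite /=; split.
  by case: (size w) => // m H; exfalso; apply: H; exists 0.
by move=> E [i [Hi _]]; rewrite E in Hi.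
Qed.

Lemma FSumN_sat w s u v : 3 <= u -> 3 <= v -> s u < size w -> s v < size w ->
  (fo_sat w s (FSumN Sigma u v) <-> s u + s v = size w).
Proof.
move=> Hu3 Hv3 Hu Hv; rewrite /FSumN.
have [u0 u1 u2] : [/\ (u==0)=false, (u==1)=false & (u==2)=false].
  by case: u Hu3 Hu => [|[|[|u]]].
have [v0 v1 v2] : [/\ (v==0)=false, (v==1)=false & (v==2)=false].
  by case: v Hv3 Hv => [|[|[|v]]].
split.
  move=> [i [Hi [j [Hj H]]]].
  case: (nn_and H) => H12 H34; case: (nn_and H12) => H1 H2; case: (nn_and H34) => H3 H4.
  move: H1 H2 H3 H4; rewrite /= ?u0 ?u1 ?u2 ?v0 ?v1 ?v2 => H1 H2 H3 H4.
  have Ej : j = (size w).-1.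
    apply/eqP; rewrite eqn_leq; apply/andP; split; first by lia.
    rewrite leqNgt; apply/negP => Hlt; apply: H3; exists j.+1; split; first by lia.
    by rewrite /= ltnSn.
  have Ei : (s u) = i.+1.
    apply/eqP; rewrite eqn_leq; apply/andP; split; last by lia.
    rewrite leqNgt; apply/negP => Hlt; apply: H2; exists i.+1; split; first by lia.
    rewrite /= ?u2; apply: and_nn; lia.
  lia.
move=> E.
exists (s u).-1; split; first by lia.
exists (size w).-1; split; first by lia.
rewrite /= ?u0 ?u1 ?u2 ?v0 ?v1 ?v2; apply: and_nn; apply: and_nn.
- lia.
- move=> [z [Hz /=]]; rewrite ?u2 => H; case: (nn_and H); lia.
- by move=> [z [Hz /=]] ; lia.
- lia.
Qed.

Lemma tr_correct w (f : nl Sigma) : forall env sg s, Rel w env sg s ->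
  (nl_sat w sg f <-> fo_sat w s (tr env f)).
Proof.
elim: f => [x y|x y z|a x|g IH|g IHg h IHh|g IHg h IHh|x g IH] env sg s R /=.
- have Rx := R x; have Ry := R y.
  case: (env x) Rx => Rx; case: (env y) Ry => Ry.
  + split=> H; [exfalso|]; [| exfalso; exact: FFalse_sat H]. lia.
  + split=> H; [exfalso|]; [| exfalso; exact: FFalse_sat H]. lia.
  + split=> _; [exact: FTrue_sat|]. lia.
  + rewrite /=; lia.
- have Rx := R x; have Ry := R y; have Rz := R z.
  case: (env x) Rx => Rx; case: (env y) Ry => Ry; case: (env z) Rz => Rz.
  + rewrite FEmpty_sat; lia.
  + split=> H; [exfalso|]; [| exfalso; exact: FFalse_sat H]. lia.
  + rewrite FIsZero_sat; lia.
  + split=> H; [exfalso|]; [| exfalso; exact: FFalse_sat H]. lia.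
  + rewrite FIsZero_sat; lia.
  + split=> H; [exfalso|]; [| exfalso; exact: FFalse_sat H]. lia.
  + rewrite FSumN_sat //; lia.
  + rewrite /=; lia.
- have Rx := R x; case: (env x) Rx => Rx.
  + split=> H; [exfalso|]; [| exfalso; exact: FFalse_sat H].
    by rewrite Rx onth_default in H.
  + by rewrite /= -(proj1 Rx).
- by rewrite (IH env sg s R).
- by rewrite (IHg env sg s R) (IHh env sg s R).
- rewrite (IHg env sg s R) (IHh env sg s R); split; [tauto|exact: nn_and].
- split.
  + move=> [i [Hi H]].
    case: (ltnP i (size w)) => Hin.
    * left; exists i; split=> //.
      apply/(IH (updb env x false) (updn sg x i)) => // y.
      rewrite /updb /updn /=; case E: (y == x); first by rewrite (eqP E) eqxx.
      have : (y.+3 == x.+3) = false by rewrite !eqSS E.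
      move=> ->; exact: R.
    * right; apply/(IH (updb env x true) (updn sg x i) s) => // y.
      rewrite /updb /updn; case E: (y == x); first by lia.
      exact: R.
  + move=> [[i [Hi H]]|H].
    * exists i; split; first by lia.
      apply/(IH (updb env x false) (updn sg x i) (fun y => if y == x.+3 then i else s y)) => // y.
      rewrite /updb /updn /=; case E: (y == x); first by rewrite (eqP E) eqxx.
      have : (y.+3 == x.+3) = false by rewrite !eqSS E.
      move=> ->; exact: R.
    * exists (size w); split=> //.
      apply/(IH (updb env x true) (updn sg x (size w)) s) => // y.
      rewrite /updb /updn; case E: (y == x) => //.
      exact: R.
Qed.

Lemma tr_closed (f : nl Sigma) : forall env bv,
  (forall x, ~~ env x -> x.+3 \in bv) -> fo_closed_rec bv (tr env f).
Proof.
elim: f => [x y|x y z|a x|g IH|g IHg h IHh|g IHg h IHh|x g IH] env bv H /=.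
- case Ex: (env x); case Ey: (env y) => //=; rewrite ?H ?Ex ?Ey //.
- case Ex: (env x); case Ey: (env y); case Ez: (env z) => //=;
    rewrite ?inE ?H ?Ex ?Ey ?Ez ?orbT //.
- case Ex: (env x) => //=; by rewrite H ?Ex.
- exact: IH.
- by rewrite IHg // IHh.
- by rewrite IHg // IHh.
- rewrite IH ?IH //.
  + by move=> y; rewrite /updb; case: (y == x) => // ; apply: H.
  + move=> y; rewrite /updb inE; case E: (y == x); first by rewrite (eqP E) eqxx.
    by move/H => ->; rewrite orbT.
Qed.

Lemma tr_sentence (f : nl Sigma) : fo_sentence (tr (fun _ => true) f).
Proof. by apply: tr_closed. Qed.

Lemma tr_models w (f : nl Sigma) :
  fo_models w (tr (fun _ => true) f) <-> nl_sat w (fun _ => size w) f.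
Proof.
have R : forall s, Rel w (fun _ => true) (fun _ => size w) s by [].
split; first by move=> H; apply/(tr_correct f (R (fun _ => 0))); apply: H.
by move=> H s; apply/(tr_correct f (R s)).
Qed.
End S.

Lemma onth_if (T : Type) (x0 : T) (t : seq T) i :
  onth t i = if i < size t then Some (nth x0 t i) else None.
Proof.
elim: t i => [|y t IH] [|i] //=.
Qed.

Lemma onth_nthE (T : Type) (t : seq T) i e : onth t i = Some e -> nth e t i = e.
Proof. exact: onth_nth. Qed.

Section Chain.
Variables (Sigma : finType) (Did Dprop : Type) (G : datagraph Sigma Did Dprop).
Local Notation V := (dg_V G).
Local Notation E := (@dg_E _ _ _ G).
Hypothesis HG : chain_graph G.
Variable rho : gpath G.
Hypothesis Hrho : first_to_last_path rho.

Definition ns := rho.1 :: map snd rho.2.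
Definition node i := nth rho.1 ns i.
Local Notation n := (size rho.2).
Definition sub (s k : nat) : gpath G := (node s, take k (drop s rho.2)).

Lemma valid_take (u : V) (t : seq (Sigma * V)) k : valid_steps u t -> valid_steps u (take k t).
Proof.
elim: t u k => [|[a v] t IH] u [|k] //=.
by case/andP=> -> /IH ->.
Qed.

Lemma valid_drop (u : V) (t : seq (Sigma * V)) j : valid_steps u t ->
  valid_steps (nth u (u :: map snd t) j) (drop j t).
Proof.
elim: t u j => [|[a v] t IH] u [|j] //=.
case/andP=> _ H.
case: (ltnP j (size t).+1) => Hj.
  rewrite (set_nth_default v); first exact: IH. by rewrite /= size_map.
by rewrite drop_oversize //; lia.
Qed.

Lemma rho_valid : valid_steps rho.1 rho.2.
Proof. by case: Hrho. Qed.

Lemma node0 : node 0 = rho.1. Proof. by []. Qed.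
Lemma noden : node n = path_last rho.
Proof. by rewrite /node /path_last (last_nth rho.1) size_map. Qed.

Lemma rho_edge i e : onth rho.2 i = Some e -> E (node i) e.1 e.2 /\ e.2 = node i.+1.
Proof.
case: e => a v He.
have Hi : i < n by rewrite -onthTE He.
have Hn := onth_nthE He.
have := valid_drop i rho_valid; rewrite (drop_nth (a, v) Hi) Hn /= => /andP [H1 _].
split=> //.
by rewrite /node /ns /= (nth_map (a, v)) // Hn.
Qed.

Lemma onth_some (T : Type) (t : seq T) i : i < size t -> exists e, onth t i = Some e.
Proof. by rewrite -onthTE; case: onth => // e _; exists e. Qed.

Lemma step_node i y : i <= n -> und_adj y (node i) \/ und_adj (node i) y ->
  exists j, j <= n /\ y = node j.
Proof.
case: HG => _ Hpred Hsucc Hi Hadj.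
have [a Ha] : exists a, E (node i) a y \/ E y a (node i).
  case: Hadj => /existsP [a /orP [H|H]]; exists a; by [right|left|left|right].
case: Ha => H; clear Hadj.
- case: (ltnP i n) => Hin; last first.
    have Ein : i = n by lia.
    case: Hrho => _ _ /(_ y a); by rewrite -noden -Ein H.
  have [e He] := onth_some Hin.
  have [He1 He2] := rho_edge He.
  have [-> _] := Hsucc _ _ _ _ _ H He1.
  by exists i.+1; split.
- case: i Hi H => [|i] Hi H.
    by case: Hrho => _ /(_ y a); rewrite H.
  have [e He] := onth_some (i:=i) (t:=rho.2) (ltac:(lia)).
  have [He1 He2] := rho_edge He.
  rewrite -He2 in H.
  have [-> _] := Hpred _ _ _ _ _ H He1.
  by exists i; split=> //; lia.
Qed.

Lemma node_cover v : exists i, i <= n /\ v = node i.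
Proof.
case: HG => Hc _ _.
have := Hc rho.1 v; move/connectP => [p Hp ->].
have : exists i, i <= n /\ rho.1 = node i by exists 0.
elim: p rho.1 Hp => [|y p IH] x /=; first by [].
case/andP => Hxy Hp [i [Hi Ei]].
rewrite Ei in Hxy.
apply: IH => //.
exact: step_node Hi (or_intror Hxy).
Qed.

Lemma node_inj_lt i j : i < j -> j <= n -> node i <> node j.
Proof.
case: HG => _ Hpred _.
elim: i j => [|i IH] [|j] //= Hij Hj Eq.
- have [e He] := onth_some (i:=j) (t:=rho.2) (ltac:(lia)).
  have [He1 He2] := rho_edge He.
  have HE : E (node j) e.1 (node 0) by rewrite Eq -He2.
  case: Hrho => _ Hf _; have := Hf (node j) e.1; by rewrite HE.
- have [e He] := onth_some (i:=j) (t:=rho.2) (ltac:(lia)).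
  have [He1 He2] := rho_edge He.
  have [f Hf] := onth_some (i:=i) (t:=rho.2) (ltac:(lia)).
  have [Hf1 Hf2] := rho_edge Hf.
  rewrite -He2 in Eq; rewrite Eq in Hf2; rewrite Hf2 in Hf1.
  have [E1 _] := Hpred _ _ _ _ _ He1 Hf1.
  by apply: (IH j) => //; lia.
Qed.

Lemma node_inj i j : i <= n -> j <= n -> node i = node j -> i = j.
Proof.
move=> Hi Hj Eq; case: (ltngtP i j) => // H.
- by case: (node_inj_lt H Hj).
- by case: (node_inj_lt H Hi).
Qed.

Lemma sub_is_path s k : is_path (sub s k).
Proof. by rewrite /is_path /sub /=; apply: valid_take; apply: valid_drop; apply: rho_valid. Qed.

Lemma valid_from_node (t : seq (Sigma * V)) s : s <= n -> valid_steps (node s) t ->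
  s + size t <= n /\ t = take (size t) (drop s rho.2).
Proof.
case: HG => _ _ Hsucc.
elim: t s => [|[a v] t IH] s Hs /=.
  by move=> _; split; [lia|rewrite take0].
case/andP => H1 H2.
case: (ltnP s n) => Hsn; last first.
  have Es : s = n by lia.
  case: Hrho => _ _ /(_ v a); by rewrite -noden -Es H1.
have [e He] := onth_some Hsn.
have [He1 He2] := rho_edge He.
have [Ev Ea] := Hsucc _ _ _ _ _ H1 He1.
rewrite Ev in H2.
rewrite He2 in H2.
have [IH1 IH2] := IH _ Hsn H2.
split; first by lia.
rewrite (drop_nth e Hsn) /= (onth_nthE He) -IH2.
by rewrite Ea Ev; case: e {He He1 He2 Ea Ev}.
Qed.

Lemma path_sub pi : is_path pi -> exists s k, s + k <= n /\ pi = sub s k.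
Proof.
case: pi => x t; rewrite /is_path /=.
have [s [Hs ->]] := node_cover x.
move=> Hv; have [H1 H2] := valid_from_node Hs Hv.
by exists s, (size t); split=> //; rewrite /sub -H2.
Qed.

Lemma sub_len s k : s + k <= n -> path_len (sub s k) = k.
Proof. move=> H; rewrite /path_len /sub /= size_takel // size_drop; lia. Qed.

Lemma sub_node_at s k i : s + k <= n ->
  node_at (sub s k) i = if i <= k then Some (node (s + i)) else None.
Proof.
move=> H; rewrite /node_at /sub /= (onth_if rho.1) /= size_map size_takel ?size_drop; last by lia.
rewrite ltnS; case: ifP => // Hik; congr Some.
case: i Hik => [|i] Hik /=; first by rewrite addn0.
rewrite map_take map_drop nth_take // nth_drop /node /ns addnS /=.
by [].
Qed.

Lemma sub_label s k : path_label (sub s k) = take k (drop s (path_label rho)).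
Proof. by rewrite /path_label /sub /= map_take map_drop. Qed.

Lemma onth_take_drop (T : Type) (t : seq T) s k i a : s + k <= size t ->
  (onth (take k (drop s t)) i = Some a <-> i < k /\ onth t (s + i) = Some a).
Proof.
move=> H; rewrite (onth_if a) size_takel ?size_drop; last by lia.
rewrite (onth_if a t).
case: (ltnP i k) => Hik.
  rewrite nth_take // nth_drop.
  have -> : s + i < size t by lia.
  by split=> [->|[_ ->]].
by split=> // -[].
Qed.
End Chain.

Definition VS p := CodeSeq.code [:: 0; p].
Definition VK p := CodeSeq.code [:: 1; p].
Definition VP l p := CodeSeq.code [:: 2; l; p].
Definition VZ := CodeSeq.code [:: 3].

Lemma code_eq (a b : seq nat) : (CodeSeq.code a == CodeSeq.code b) = (a == b).
Proof. exact: (inj_eq (can_inj CodeSeq.codeK)). Qed.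

Lemma Veqs :
  (forall p q, (VS p == VS q) = (p == q)) * (forall p q, (VK p == VK q) = (p == q)) *
  (forall l p m q, (VP l p == VP m q) = ((l == m) && (p == q))) *
  (forall p q, (VS p == VK q) = false) * (forall p q, (VK p == VS q) = false) *
  (forall p l q, (VS p == VP l q) = false) * (forall p l q, (VP l q == VS p) = false) *
  (forall p l q, (VK p == VP l q) = false) * (forall p l q, (VP l q == VK p) = false) *
  (forall p, (VS p == VZ) = false) * (forall p, (VK p == VZ) = false) *
  (forall l p, (VP l p == VZ) = false) * ((VZ == VZ) = true).
Proof.
rewrite /VS /VK /VP /VZ; do !split; move=> *; rewrite code_eq //= !eqseq_cons ?andbT //.
Qed.

Definition NLe (Sigma : Type) (x y : nat) : nl Sigma := NNot (NLt y x).
Definition NSucc (Sigma : Type) (x y : nat) : nl Sigma :=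
  NAnd (NLt x y) (NNot (NEx VZ (NAnd (NLt x VZ) (NLt VZ y)))).

Fixpoint tm (Sigma : Type) (f : mwl Sigma) : nl Sigma :=
  match f with
  | MEdge a p l m => NAnd (NSucc Sigma (VP l p) (VP m p))
      (NAnd (NLt (VP l p) (VK p)) (NEx VZ (NAnd (NAdd (VS p) (VP l p) VZ) (NP a VZ))))
  | MLt l p m q => NLt (VP l p) (VP m q)
  | MEqId l p m q => NAnd (NLe Sigma (VP l p) (VK p)) (NAnd (NLe Sigma (VP m q) (VK q))
      (NEx VZ (NAnd (NAdd (VS p) (VP l p) VZ) (NAdd (VS q) (VP m q) VZ))))
  | MEqData l p m q => NAnd (NLe Sigma (VP l p) (VK p)) (NLe Sigma (VP m q) (VK q))
  | MNot g => NNot (tm g)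
  | MOr g h => NOr (tm g) (tm h)
  | MExPos l p g => NEx (VP l p) (NAnd (NLe Sigma (VP l p) (VK p)) (tm g))
  | MExPath p g => NEx (VS p) (NEx (VK p) (NAnd (NEx VZ (NAdd (VS p) (VK p) VZ)) (tm g)))
  end.

Section Sat.
Variable Sigma : finType.
Implicit Types (w : seq Sigma).

Lemma NLe_sat w s x y : nl_sat w s (NLe Sigma x y) <-> s x <= s y.
Proof. rewrite /NLe /=; split; lia. Qed.

Lemma NSucc_sat w s l p m q : s (VP m q) <= size w ->
  (nl_sat w s (NSucc Sigma (VP l p) (VP m q)) <-> s (VP m q) = (s (VP l p)).+1).
Proof.
move=> Hm; rewrite /NSucc /=.
split.
  move=> [H1 H2]; apply/eqP; rewrite eqn_leq H1 andbT leqNgt; apply/negP => H3.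
  apply: H2; exists (s (VP l p)).+1; split; first by lia.
  rewrite /= /updn !Veqs; lia.
move=> E; split; first by lia.
move=> [i [_ H]]; move: H; rewrite /= /updn !Veqs; lia.
Qed.
End Sat.

Section Corr.
Variables (Sigma : finType) (Did Dprop : Type) (G : datagraph Sigma Did Dprop).
Hypothesis HG : chain_graph G.
Variable rho : gpath G.
Hypothesis Hrho : first_to_last_path rho.
Hypothesis Hconst : const_data G.
Local Notation n := (size rho.2).
Local Notation w := (path_label rho).

Lemma size_w : size w = n. Proof. by rewrite size_map. Qed.

Definition RelM (bp : seq nat) (bpos : seq (nat * nat)) (nu : nat -> gpath G)
   (mu : nat -> nat -> nat) (sg : nat -> nat) :=
 (forall p, p \in bp -> sg (VS p) + sg (VK p) <= n /\ nu p = sub rho (sg (VS p)) (sg (VK p))) /\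
 (forall l p, (l, p) \in bpos -> mu l p = sg (VP l p) /\ sg (VP l p) <= n).

Lemma RelM_pos bp bpos nu mu sg l p i : RelM bp bpos nu mu sg -> i <= n ->
  RelM bp ((l, p) :: bpos) nu (upd_pos mu l p i) (updn sg (VP l p) i).
Proof.
move=> [R1 R2] Hi; split.
  by move=> q Hq; rewrite /updn !Veqs; apply: R1.
move=> l' p'; rewrite inE /upd_pos /updn Veqs.
case E: ((l' == l) && (p' == p)); first by [].
by rewrite /= xpair_eqE E; apply: R2.
Qed.

Lemma RelM_path bp bpos nu mu sg p s k : RelM bp bpos nu mu sg -> s + k <= n ->
  RelM (p :: bp) bpos (upd_path nu p (sub rho s k)) mu (updn (updn sg (VS p) s) (VK p) k).
Proof.
move=> [R1 R2] Hi; split.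
  move=> q; rewrite inE /upd_path /updn !Veqs.
  case E: (q == p); first by [].
  by move=> /= Hq; apply: R1.
by move=> l' p' H; rewrite /updn !Veqs; apply: R2.
Qed.

Lemma tm_correct (f : mwl Sigma) : forall bp bpos nu mu sg,
  mwl_closed_rec bp bpos f -> RelM bp bpos nu mu sg ->
  (mwl_sat nu mu f <-> nl_sat w sg (tm f)).
Proof.
elim: f => [a p l m|l p m q|l p m q|l p m q|g IH|g IHg h IHh|l p g IH|p g IH]
  bp bpos nu mu sg /=; rewrite ?size_w.
- move=> /andP [/andP [Hl Hp] /andP [Hm _]] [R1 R2].
  have [HSK Hnu] := R1 p Hp; have [El HPl] := R2 l p Hl; have [Em HPm] := R2 m p Hm.
  rewrite Hnu sub_label El Em onth_take_drop ?size_w //.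
  rewrite /updn !Veqs.
  split.
  + move=> [E1 [E2 E3]]; split; first split; first by lia.
    * move=> [i [Hi [H1 H2]]]; lia.
    * split=> //; exists (sg (VS p) + sg (VP l p)); split; first by lia.
      by split.
  + move=> [[H1 H2] [H3 [z [Hz [E1 E2]]]]].
    have E4 : sg (VP m p) = (sg (VP l p)).+1.
      apply/eqP; rewrite eqn_leq H1 andbT leqNgt; apply/negP => H5.
      apply: H2; exists (sg (VP l p)).+1; split; lia.
    by split=> //; split=> //; rewrite E1.
- case/and3P => /andP [Hl Hp] Hm Hq [R1 R2].
  by rewrite (R2 l p Hl).1 (R2 m q Hm).1.
- case/and3P => /andP [Hl Hp] Hm Hq [R1 R2].
  have [HSKp Hnup] := R1 p Hp; have [El HPl] := R2 l p Hl.
  have [HSKq Hnuq] := R1 q Hq; have [Em HPm] := R2 m q Hm.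
  rewrite Hnup Hnuq El Em !sub_node_at // /updn !Veqs.
  split.
  + case: ifPn => H1; last by move=> [u [v []]].
    case: ifPn => H2; last by move=> [u [v [_ []]]].
    move=> [u [v [[<-] [[<-] Euv]]]].
    have Huv : sg (VS p) + sg (VP l p) = sg (VS q) + sg (VP m q).
      by apply: (node_inj HG Hrho) => //; lia.
    split; first by lia. split; first by lia.
    exists (sg (VS p) + sg (VP l p)); split; first by lia. split=> //; lia.
  + move=> [G1 [G2 [z [Hz [E1 E2]]]]].
    have -> : sg (VP l p) <= sg (VK p) by lia.
    have -> : sg (VP m q) <= sg (VK q) by lia.
    by exists (node rho z), (node rho z); rewrite E1 E2.
- case/and3P => /andP [Hl Hp] Hm Hq [R1 R2].
  have [HSKp Hnup] := R1 p Hp; have [El HPl] := R2 l p Hl.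
  have [HSKq Hnuq] := R1 q Hq; have [Em HPm] := R2 m q Hm.
  rewrite Hnup Hnuq El Em !sub_node_at //.
  split.
  + case: ifPn => H1; last by move=> [u [v []]].
    case: ifPn => H2; last by move=> [u [v [_ []]]].
    by move=> _; split; lia.
  + move=> [G1 G2].
    have -> : sg (VP l p) <= sg (VK p) by lia.
    have -> : sg (VP m q) <= sg (VK q) by lia.
    by exists (node rho (sg (VS p) + sg (VP l p))), (node rho (sg (VS q) + sg (VP m q))).
- by move=> Hc R; rewrite (IH _ _ _ _ _ Hc R).
- by case/andP => Hg Hh R; rewrite (IHg _ _ _ _ _ Hg R) (IHh _ _ _ _ _ Hh R).
- case/andP => Hp Hg R.
  have [HSK Hnu] := R.1 p Hp.
  rewrite Hnu sub_len //.
  split.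
  + move=> [i [Hi H]]; exists i; split; first by lia.
    split; first by rewrite /updn !Veqs !eqxx /=; lia.
    by apply/(IH _ _ _ _ _ Hg (RelM_pos l p R _)) => //; lia.
  + move=> [i [Hi [Hle H]]]; exists i; split; first by move: Hle; rewrite /updn !Veqs !eqxx /=; lia.
    by apply/(IH _ _ _ _ _ Hg (RelM_pos l p R Hi)).
- move=> Hg R.
  split.
  + move=> [pi [Hpi H]].
    have [s [k [Hsk Epi]]] := path_sub HG Hrho Hpi.
    exists s; split; first by lia. exists k; split; first by lia.
    split; first by exists (s + k); split; [lia| rewrite /updn !Veqs !eqxx].
    rewrite Epi in H.
    by apply/(IH _ _ _ _ _ Hg (RelM_path p R Hsk)).
  + move=> [s [Hs [k [Hk [[z [Hz E]] H]]]]].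
    move: E; rewrite /updn !Veqs !eqxx => E.
    have Hsk : s + k <= n by lia.
    exists (sub rho s k); split; first exact: (sub_is_path Hrho).
    by apply/(IH _ _ _ _ _ Hg (RelM_path p R Hsk)).
Qed.
End Corr.

Section Part1.
Variable Sigma : finType.
Lemma part1 (Did Dprop : Type) (phi : mwl Sigma) : mwl_sentence phi ->
  forall G : datagraph Sigma Did Dprop, chain_graph G -> const_data G ->
  forall rho : gpath G, first_to_last_path rho ->
  (mwl_models G phi <-> fo_models (path_label rho) (tr (fun _ => true) (tm phi))).
Proof.
move=> Hphi G HG Hc rho Hrho.
rewrite tr_models.
have R : forall nu mu, RelM rho [::] [::] nu mu (fun _ => size (path_label rho)) by [].
split.
  move=> H; apply/(tm_correct HG Hrho Hc Hphi (R (fun _ => rho) (fun _ _ => 0))).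
  exact: H.
by move=> H nu mu; apply/(tm_correct HG Hrho Hc Hphi (R nu mu)).
Qed.
End Part1.

Section Gk.
Variables (Sigma : finType) (Did Dprop : Type) (a : Sigma).
Variables (fid : nat -> Did) (Hfid : injective fid) (d0 : Dprop).

Definition Vk (k : nat) : finType := ('I_k.+1 * bool)%type.

Definition Ek k (x : Vk k) (b : Sigma) (y : Vk k) : bool :=
  [&& b == a, x.1 == y.1, ~~ x.2 & y.2].

Lemma idk_inj k : injective (fun x : Vk k => fid (pickle x)).
Proof. by move=> x y /Hfid /(pcan_inj (@pickleK _)). Qed.

Lemma Vk_nonempty k : 0 < #|Vk k|.
Proof. by rewrite card_prod card_ord card_bool. Qed.

Definition Gk k : datagraph Sigma Did Dprop :=
  @DataGraph Sigma Did Dprop (Vk k) (@Ek k) (fun x => fid (pickle x)) (@idk_inj k)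
    (fun _ => d0) (Vk_nonempty k).

Lemma count_Gk k : count_label_edges (Gk k) a = k.+1.
Proof.
rewrite /count_label_edges /=.
pose f := fun i : 'I_k.+1 => ((i, false), (i, true)) : (Vk k * Vk k)%type.
have inj_f : injective f by move=> i j [].
rewrite -[in RHS](card_ord k.+1) -(card_image inj_f).
apply: eq_card => e; rewrite inE.
apply/idP/imageP.
  case: e => [[i b] [j c]]; rewrite /Ek /= eqxx /= => /and3P [/eqP <- Hb Hc].
  exists i => //; rewrite /f; move: Hb Hc; case: b; case: c => //.
by move=> [i _ ->]; rewrite /Ek /= !eqxx.
Qed.
End Gk.

Section EF.
Variables (Sigma : finType) (Did Dprop : Type) (a : Sigma).
Variables (fid : nat -> Did) (Hfid : injective fid) (d0 : Dprop).
Local Notation G k := (Gk a Hfid d0 k).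

Definition comp k (pi : gpath (G k)) : 'I_k.+1 := pi.1.1.
Definition sh k (pi : gpath (G k)) := (pi.1.2, size pi.2).

Lemma classify k (pi : gpath (G k)) : is_path pi -> size pi.2 <= 1 /\
  (size pi.2 = 1 -> pi.2 = [:: (a, (pi.1.1, true))] /\ pi.1.2 = false).
Proof.
case: pi => [[i b] [|[c [j d]] [|[e y] t]]] //=.
- by rewrite /is_path /= /Ek /= andbT => /and4P [/eqP -> /eqP <- /negPf -> ->].
- by rewrite /is_path /= /Ek /= => /andP [/and4P [_ _ _ ->] /andP [/and4P [_ _]]].
Qed.

Lemma node_at_k k (pi : gpath (G k)) j : is_path pi ->
  node_at pi j = if j <= size pi.2 then Some (pi.1.1, if j == 0 then pi.1.2 else true)
                 else None.
Proof.
move=> /classify [H1 H2].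
case: pi H1 H2 => [[i b] t] /= H1 H2.
case: j => [|j] /=; first by rewrite /node_at.
case: t H1 H2 => [|e [|e' t]] //= _ H2.
  by rewrite /node_at; case: j.
have [-> _] := H2 erefl.
rewrite /node_at /=; case: j => [|j] //=; exact: onth0n.
Qed.

Lemma label_k k (pi : gpath (G k)) : is_path pi -> path_label pi = nseq (size pi.2) a.
Proof.
move=> /classify [H1 H2].
case: pi H1 H2 => [x [|e [|e' t]]] //= _ H2.
by have [-> _] := H2 erefl.
Qed.

Fixpoint pdepth (f : mwl Sigma) : nat :=
  match f with
  | MNot g => pdepth g
  | MOr g h => maxn (pdepth g) (pdepth h)
  | MExPos _ _ g => pdepth g
  | MExPath _ g => (pdepth g).+1
  | _ => 0
  end.

Definition RelEF k k' (bp : seq nat) (nu : nat -> gpath (G k)) (nu' : nat -> gpath (G k')) :=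
  forall p, p \in bp -> [/\ is_path (nu p), is_path (nu' p), sh (nu p) = sh (nu' p) &
    forall q, q \in bp -> (comp (nu p) == comp (nu q)) = (comp (nu' p) == comp (nu' q))].

Lemma RelEF_sym k k' bp nu nu' : @RelEF k k' bp nu nu' -> RelEF bp nu' nu.
Proof.
move=> R p Hp; have [H1 H2 H3 H4] := R p Hp; split=> // q Hq.
by rewrite H4.
Qed.

Lemma fresh K (s : seq 'I_K) : size s < K -> exists c, c \notin s.
Proof.
move=> Hs; case: (pickP (fun c => c \notin s)) => [c Hc|H]; first by exists c.
have : #|'I_K| <= size s.
  apply: leq_trans (card_size s); apply: subset_leq_card; apply/subsetP => c _.
  by move: (H c) => /= /negbFE.
rewrite card_ord; lia.
Qed.

Lemma ext_path k k' bp nu nu' p (pi : gpath (G k)) : @RelEF k k' bp nu nu' ->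
  size bp < k'.+1 -> is_path pi ->
  exists pi' : gpath (G k'), is_path pi' /\
    RelEF (p :: bp) (upd_path nu p pi) (upd_path nu' p pi').
Proof.
move=> R Hs Hpi.
have [c' Hc'] : exists c' : ordinal k'.+1, forall r, r \in bp ->
    (comp pi == comp (nu r)) = (c' == comp (nu' r)).
  case: (boolP (has (fun r => comp (nu r) == comp pi) bp)).
    move/hasP => [r Hr /eqP Er]; exists (comp (nu' r)) => r' Hr'.
    by rewrite -Er; have [_ _ _ ->] := R r Hr.
  move/hasPn => Hn.
  have Hsz' : size [seq comp (nu' r) | r <- bp] < k'.+1 by rewrite size_map.
  have [c Hc] := fresh Hsz'.
  exists c => r Hr.
  have /negPf -> : comp pi != comp (nu r) by rewrite eq_sym; exact: Hn.
  apply/esym/negPf/negP => /eqP E; move: Hc; rewrite E; by rewrite (map_f (fun r0 => comp (nu' r0)) Hr).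
have [Hsz Hone] := classify Hpi.
pose pi' : gpath (G k') :=
  ((c', pi.1.2), if size pi.2 == 1 then [:: (a, (c', true))] else [::]).
have Hpi' : is_path pi'.
  rewrite /pi' /is_path /=; case: eqP => // /Hone [_ ->].
  by rewrite /= /Ek /= !eqxx.
have Hsh : sh pi = sh pi'.
  rewrite /sh /pi' /=; congr pair; case: eqP => //= H; move: Hsz H; case: (pi.2) => [|x [|y t]] //.
exists pi'; split=> //.
move=> x; rewrite inE /upd_path; case: eqP => [_ _|Hx /= Hxb].
  split=> // y; rewrite inE; case: eqP => [_ _|Hy /= Hyb]; first by rewrite !eqxx.
  exact: Hc'.
have [H1 H2 H3 H4] := R x Hxb; split=> // y; rewrite inE; case: eqP => [_ _|Hy /= Hyb].
  by rewrite eq_sym (Hc' x Hxb) eq_sym.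
exact: H4.
Qed.

Lemma eqSome (T : eqType) (x y : T) : (Some x == Some y) = (x == y).
Proof. by []. Qed.

Lemma ex_some_eq (T : eqType) (o1 o2 : option T) :
  (exists u v, o1 = Some u /\ o2 = Some v /\ u = v) <-> isSome o1 && (o1 == o2).
Proof.
split; first by move=> [u [v [-> [-> ->]]]]; rewrite eqxx.
by case: o1 => // u /andP [_ /eqP <-]; exists u, u.
Qed.

Lemma ex_some_any (T D : Type) (o1 o2 : option T) (x : D) :
  (exists u v, o1 = Some u /\ o2 = Some v /\ x = x) <-> isSome o1 && isSome o2.
Proof.
split; first by move=> [u [v [-> [-> _]]]].
by case: o1 => // u; case: o2 => // v _; exists u, v.
Qed.

Lemma ef k k' (f : mwl Sigma) : forall bp bpos nu nu' mu,
  mwl_closed_rec bp bpos f -> size bp + pdepth f <= k.+1 -> size bp + pdepth f <= k'.+1 ->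
  @RelEF k k' bp nu nu' -> (mwl_sat nu mu f <-> mwl_sat nu' mu f).
Proof.
elim: f => [b p l m|l p m q|l p m q|l p m q|g IH|g IHg h IHh|l p g IH|p g IH]
  bp bpos nu nu' mu /=.
- move=> /andP [/andP [Hl Hp] _] _ _ R.
  have [Pp Pp' Shp _] := R p Hp.
  move: Shp; rewrite /sh => -[Bp Sp].
  by rewrite !label_k // Sp.
- by [].
- case/and3P => /andP [Hl Hp] Hm Hq _ _ R.
  have [Pp Pp' Shp Cp] := R p Hp; have [Pq Pq' Shq Cq] := R q Hq.
  move: Shp Shq; rewrite /sh => -[Bp Sp] [Bq Sq].
  rewrite !node_at_k // !ex_some_eq Sp Sq Bp Bq.
  repeat (case: ifP => _ //=);
    by rewrite !eqSome !xpair_eqE; have := Cp q Hq; rewrite /comp => ->.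
- case/and3P => /andP [Hl Hp] Hm Hq _ _ R.
  have [Pp Pp' Shp Cp] := R p Hp; have [Pq Pq' Shq Cq] := R q Hq.
  move: Shp Shq; rewrite /sh => -[Bp Sp] [Bq Sq].
  rewrite !node_at_k // Sp Sq; split => -[u [v [E1 [E2 _]]]]; move: E1 E2; repeat (case: ifP => // _); by do 2 eexists.
- by move=> Hc H1 H2 R; rewrite (IH _ _ _ _ mu Hc H1 H2 R).
- case/andP => Hg Hh H1 H2 R.
  rewrite (IHg _ _ _ _ mu Hg _ _ R) ?(IHh _ _ _ _ mu Hh _ _ R) //; lia.
- case/andP => Hp Hg H1 H2 R.
  have [Pp Pp' Shp _] := R p Hp.
  move: Shp; rewrite /sh => -[Bp Sp].
  rewrite /path_len Sp.
  split=> -[i [Hi H]]; exists i; split=> //.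
    by rewrite -(IH _ _ _ _ _ Hg H1 H2 R).
  by rewrite (IH _ _ _ _ _ Hg H1 H2 R).
- move=> Hg H1 H2 R.
  have H1' : size (p :: bp) + pdepth g <= k.+1 by rewrite /=; lia.
  have H2' : size (p :: bp) + pdepth g <= k'.+1 by rewrite /=; lia.
  split.
  + move=> [pi [Hpi H]].
    have [pi' [Hpi' R']] := ext_path p R (ltac:(lia)) Hpi.
    exists pi'; split=> //.
    by rewrite -(IH _ _ _ _ mu Hg H1' H2' R').
  + move=> [pi' [Hpi' H]].
    have [pi [Hpi R']] := ext_path p (RelEF_sym R) (ltac:(lia)) Hpi'.
    exists pi; split=> //.
    by rewrite (IH _ _ _ _ mu Hg H1' H2' (RelEF_sym R')).
Qed.

End EF.

Lemma part2 (Sigma : finType) (Did Dprop : Type)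
  (Did_infinite : exists f : nat -> Did, injective f)
  (Dprop_infinite : exists f : nat -> Dprop, injective f) (a : Sigma) :
  ~ exists phi : mwl Sigma, mwl_sentence phi /\
      forall G : datagraph Sigma Did Dprop,
        (mwl_models G phi <-> ~~ odd (count_label_edges G a)).
Proof.
move=> [phi [Hs H]].
case: Did_infinite => fid Hfid; case: Dprop_infinite => fd _.
set d := pdepth phi.
set G1 := Gk a Hfid (fd 0) d; set G2 := Gk a Hfid (fd 0) d.+1.
have R0 : forall nu nu', @RelEF _ _ _ a fid Hfid (fd 0) d d.+1 [::] nu nu' by [].
have E : mwl_models G1 phi <-> mwl_models G2 phi.
  split => Hm nu mu.
  - pose nu0 := fun _ : nat => (((ord0 : 'I_d.+1), false), [::]) : gpath G1.
    apply/(ef (bp := [::]) (bpos := [::]) mu Hs _ _ (R0 nu0 nu)); try (rewrite /d /=; lia).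
    exact: Hm.
  - pose nu0 := fun _ : nat => (((ord0 : 'I_d.+2), false), [::]) : gpath G2.
    apply/(ef (bp := [::]) (bpos := [::]) mu Hs _ _ (R0 nu nu0)); try (rewrite /d /=; lia).
    exact: Hm.
have H1 := H G1; have H2 := H G2.
rewrite /G1 /G2 !count_Gk in H1 H2.
move: H1 H2 E; rewrite /G1 /G2 /=; case: (odd d) => /= [[_ A] [B _] [C _] | [A _] [_ B] [_ C]].
  by have := B (C (A isT)).
by have := A (C (B isT)).
Qed.

Theorem mainTheorem17 (Sigma : finType) (Did Dprop : Type)
  (Did_infinite : exists f : nat -> Did, injective f)
  (Dprop_infinite : exists f : nat -> Dprop, injective f) :
  (forall phi : mwl Sigma, mwl_sentence phi ->
     exists psi : fo Sigma, fo_sentence psi /\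
       forall G : datagraph Sigma Did Dprop,
         chain_graph G -> const_data G ->
         forall rho : gpath G, first_to_last_path rho ->
           (mwl_models G phi <-> fo_models (path_label rho) psi))
  /\
  (forall a : Sigma,
     ~ exists phi : mwl Sigma, mwl_sentence phi /\
         forall G : datagraph Sigma Did Dprop,
           (mwl_models G phi <-> ~~ odd (count_label_edges G a))).
Proof.
split.
- move=> phi Hphi; exists (tr (fun _ => true) (tm phi)); split; first exact: tr_sentence.
  move=> G HG Hc rho Hrho; exact: part1.
- move=> a; exact: part2.
Qed.
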